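(* Let $E_5=(0,I_5,M_5,N_5)$ be an equilibrium of system (S) with $B=0$, $I_5>0$, $M_5\ge 0$, $N_5\ge 0$ (so that necessarily $I_5=b/(m+\mu)$). Then $E_5$ is locally asymptotically stable provided the following three conditions hold: $$\frac{b}{I_5}<\gamma I_5+m+\lambda N_5,$$ $$2n+\frac{3p(M_5+N_5)}{hI_5}+\beta I_5+\delta N_5>r+\delta M_5,$$ $$\Big(r-n-\frac{p(2M_5+N_5)}{hI_5}-\beta I_5-\delta N_5\Big)\Big(\delta M_5-n-\frac{p(M_5+2N_5)}{hI_5}\Big)+\Big(\beta I_5-\frac{pN_5}{hI_5}+\delta N_5\Big)\Big(\frac{pM_5}{hI_5}+\delta M_5-r\Big)>0.$$
   Context: All parameters $b,\lambda,\gamma,m,\mu,r,n,p,h,\beta,\delta,e$ are positive constants. Here $B,I$ denote healthy and infected bees and $M,N$ healthy and infected mites. The model (S) is $$B'=\frac{bB}{B+I}-\lambda BN-\gamma BI-mB,\qquad I'=\frac{bI}{B+I}+\lambda BN+\gamma BI-(m+\mu)I,$$ $$M'=r(M+N)-nM-\frac{p}{h(B+I)}M(M+N)-M(\beta I+\delta N+eB),$$ $$N'=-nN-\frac{p}{h(B+I)}N(M+N)+\beta MI+\delta MN-eNB,$$ considered on the domain $\mathcal{D}^0=\{(B,I,M,N)\in\mathbb{R}^4_+ : B+I\neq 0\}$, where $\mathbb{R}_+=[0,\infty)$. *)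

(* Defs.v *)
From Stdlib Require Import Reals Lra.
Open Scope R_scope.

Definition fB (b lam gam m mu r n p h beta delta e : R) (B I M N : R) : R :=
  b * B / (B + I) - lam * B * N - gam * B * I - m * B.
Definition fI (b lam gam m mu r n p h beta delta e : R) (B I M N : R) : R :=
  b * I / (B + I) + lam * B * N + gam * B * I - (m + mu) * I.
Definition fM (b lam gam m mu r n p h beta delta e : R) (B I M N : R) : R :=
  r * (M + N) - n * M - p / (h * (B + I)) * M * (M + N)
  - M * (beta * I + delta * N + e * B).
Definition fN (b lam gam m mu r n p h beta delta e : R) (B I M N : R) : R :=
  - n * N - p / (h * (B + I)) * N * (M + N) + beta * M * I + delta * M * N
  - e * N * B.

Definition inD0 (B I M N : R) : Prop :=
  0 <= B /\ 0 <= I /\ 0 <= M /\ 0 <= N /\ B + I <> 0.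

(* distance in R^4 (l1 norm; all norms on R^4 are equivalent) *)
Definition dist4 (B I M N B0 I0 M0 N0 : R) : R :=
  Rabs (B - B0) + Rabs (I - I0) + Rabs (M - M0) + Rabs (N - N0).

Definition is_solution (b lam gam m mu r n p h beta delta e : R)
    (B I M N : R -> R) : Prop :=
  (forall t, 0 <= t -> inD0 (B t) (I t) (M t) (N t)) /\
  (forall t, 0 < t ->
     derivable_pt_lim B t (fB b lam gam m mu r n p h beta delta e (B t) (I t) (M t) (N t)) /\
     derivable_pt_lim I t (fI b lam gam m mu r n p h beta delta e (B t) (I t) (M t) (N t)) /\
     derivable_pt_lim M t (fM b lam gam m mu r n p h beta delta e (B t) (I t) (M t) (N t)) /\
     derivable_pt_lim N t (fN b lam gam m mu r n p h beta delta e (B t) (I t) (M t) (N t))) /\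
  (forall eps, 0 < eps -> exists dlt, 0 < dlt /\
     forall t, 0 <= t < dlt ->
       dist4 (B t) (I t) (M t) (N t) (B 0) (I 0) (M 0) (N 0) < eps).

Definition is_equilibrium (b lam gam m mu r n p h beta delta e : R)
    (B0 I0 M0 N0 : R) : Prop :=
  fB b lam gam m mu r n p h beta delta e B0 I0 M0 N0 = 0 /\
  fI b lam gam m mu r n p h beta delta e B0 I0 M0 N0 = 0 /\
  fM b lam gam m mu r n p h beta delta e B0 I0 M0 N0 = 0 /\
  fN b lam gam m mu r n p h beta delta e B0 I0 M0 N0 = 0.

Definition loc_asympt_stable (b lam gam m mu r n p h beta delta e : R)
    (B0 I0 M0 N0 : R) : Prop :=
  (forall eps, 0 < eps -> exists dlt, 0 < dlt /\
     forall B I M N : R -> R,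
       is_solution b lam gam m mu r n p h beta delta e B I M N ->
       dist4 (B 0) (I 0) (M 0) (N 0) B0 I0 M0 N0 < dlt ->
       forall t, 0 <= t -> dist4 (B t) (I t) (M t) (N t) B0 I0 M0 N0 < eps) /\
  (exists dlt, 0 < dlt /\
     forall B I M N : R -> R,
       is_solution b lam gam m mu r n p h beta delta e B I M N ->
       dist4 (B 0) (I 0) (M 0) (N 0) B0 I0 M0 N0 < dlt ->
       forall eps, 0 < eps -> exists T, 0 <= T /\
         forall t, T <= t -> dist4 (B t) (I t) (M t) (N t) B0 I0 M0 N0 < eps).

(* Main.v *)
Require Import Defs.
From Stdlib Require Import Reals Lra Classical.
Open Scope R_scope.


Lemma cont_of_deriv (f : R -> R) (x l : R) :
  derivable_pt_lim f x l ->
  forall eps, 0 < eps -> exists del, 0 < del /\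
    forall y, Rabs (y - x) < del -> Rabs (f y - f x) < eps.
Proof.
  intros H eps Heps.
  pose proof (derivable_continuous_pt f x (exist _ l H)) as Hc.
  unfold continuity_pt, continue_in, limit1_in, limit_in in Hc.
  destruct (Hc eps Heps) as [alp [Ha Hb]].
  exists alp. split; [lra|]. intros y Hy.
  destruct (Req_dec y x) as [->|Hne].
  - rewrite Rminus_diag, Rabs_R0; lra.
  - apply (Hb y). split. split; [exact I| congruence]. simpl. unfold R_dist. exact Hy.
Qed.

Lemma invariance (phi dphi : R -> R) (rho : R) :
  (forall t, 0 < t -> derivable_pt_lim phi t (dphi t)) ->
  (forall t, 0 < t -> phi t < rho -> dphi t <= 0) ->
  (exists d0, 0 < d0 /\ forall t, 0 <= t < d0 -> phi t < rho) ->
  forall t, 0 <= t -> phi t < rho.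
Proof.
  intros Hd Hneg [d0 [Hd0 Hini]] t1 Ht1.
  destruct (Rlt_dec (phi t1) rho) as [ok|Hno]; [exact ok|exfalso].
  apply Rnot_lt_le in Hno.
  assert (Ht1d : d0 <= t1).
  { destruct (Rle_dec d0 t1) as [h|h]; [exact h|].
    apply Rnot_le_lt in h. assert (phi t1 < rho) by (apply Hini; lra). lra. }
  set (E := fun s => 0 <= s <= t1 /\ forall tau, 0 <= tau <= s -> phi tau < rho).
  assert (HbE : bound E).
  { exists t1. intros s [Hs _]. lra. }
  assert (HeE : exists s, E s).
  { exists 0. split; [lra|]. intros tau Htau. apply Hini. lra. }
  destruct (completeness E HbE HeE) as [T [HTub HTl]].
  assert (HT1 : T <= t1).
  { apply HTl. intros s [Hs _]. lra. }
  assert (HdE : E (d0/2)).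
  { split; [lra|]. intros tau Htau. apply Hini. lra. }
  assert (HT0 : d0/2 <= T) by (apply HTub; exact HdE).
  assert (Hbelow : forall tau, 0 <= tau < T -> phi tau < rho).
  { intros tau Htau.
    destruct (classic (exists s, E s /\ tau < s)) as [[s [[_ Hs] Hts]]|Hn].
    - apply Hs. lra.
    - exfalso. assert (T <= tau).
      { apply HTl. intros s Hs. destruct (Rle_dec s tau) as [h|h]; [exact h|].
        exfalso. apply Hn. exists s. split; [exact Hs| lra]. }
      lra. }
  assert (HphiT : rho <= phi T).
  { destruct (Rlt_dec (phi T) rho) as [Hl|Hl]; [|lra]. exfalso.
    destruct (cont_of_deriv phi T (dphi T) (Hd T ltac:(lra)) (rho - phi T) ltac:(lra))
      as [del [Hdel Hc]].
    assert (Hnear : forall tau, Rabs (tau - T) < del -> phi tau < rho).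
    { intros tau Ht. specialize (Hc tau Ht). apply Rabs_def2 in Hc. lra. }
    destruct (Req_dec T t1) as [Heq|Hne].
    - subst T. lra.
    - assert (HE' : E (Rmin (T + del/2) t1)).
      { split. split; [apply Rmin_glb; lra| apply Rmin_r].
        intros tau Htau. destruct (Rlt_dec tau T) as [h|h].
        + apply Hbelow; lra.
        + apply Hnear. assert (tau <= T + del/2) by (eapply Rle_trans; [apply Htau| apply Rmin_l]).
          apply Rabs_def1; lra. }
      apply HTub in HE'.
      unfold Rmin in HE'. destruct (Rle_dec (T + del/2) t1); lra. }
  set (s := Rmin d0 T / 2).
  assert (Hs0 : 0 < s).
  { unfold s. unfold Rmin. destruct (Rle_dec d0 T); lra. }
  assert (HsT : s < T).
  { unfold s. unfold Rmin; destruct (Rle_dec d0 T); lra. }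
  assert (Hsd : s < d0).
  { unfold s. unfold Rmin; destruct (Rle_dec d0 T); lra. }
  destruct (MVT_cor2 phi dphi s T HsT) as [c [Hmvt Hc]].
  { intros c Hc. apply Hd. lra. }
  assert (Hpc : phi c < rho) by (apply Hbelow; lra).
  pose proof (Hneg c ltac:(lra) Hpc).
  assert (phi s < rho) by (apply Hini; lra).
  intros. nra.
Qed.

Lemma decay (phi dphi : R -> R) (rho alpha : R) :
  0 < alpha ->
  (forall t, 0 < t -> derivable_pt_lim phi t (dphi t)) ->
  (forall t, 0 <= t -> phi t < rho) ->
  (forall t, 0 < t -> phi t < rho -> dphi t <= - alpha * phi t) ->
  forall t, 1 <= t -> phi t * exp (alpha * t) <= rho * exp alpha.
Proof.
  intros Ha Hd Hinv Hneg t Ht.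
  set (psi := fun s => phi s * exp (alpha * s)).
  assert (Hpsi : forall s, 0 < s ->
    derivable_pt_lim psi s (dphi s * exp (alpha * s) + phi s * (exp (alpha * s) * alpha))).
  { intros s Hs.
    apply (derivable_pt_lim_mult phi (fun s => exp (alpha * s))).
    - apply Hd; exact Hs.
    - apply (derivable_pt_lim_comp (fun s => alpha * s) exp).
      + pose proof (derivable_pt_lim_scal id alpha s 1 (derivable_pt_lim_id s)) as Hs'.
        rewrite Rmult_1_r in Hs'. exact Hs'.
      + apply derivable_pt_lim_exp. }
  assert (H1 : psi t <= psi 1).
  { destruct (Req_dec t 1) as [->|Hne]; [lra|].
    destruct (MVT_cor2 psi (fun s => dphi s * exp (alpha * s) + phi s * (exp (alpha * s) * alpha)) 1 t ltac:(lra)) as [c [Hm Hc]].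
    { intros c Hc. apply Hpsi. lra. }
    assert (Hdc := Hneg c ltac:(lra) (Hinv c ltac:(lra))).
    pose proof (exp_pos (alpha * c)).
    assert (dphi c * exp (alpha * c) + phi c * (exp (alpha * c) * alpha) <= 0) by nra.
    nra. }
  unfold psi in H1. rewrite Rmult_1_r in H1.
  pose proof (Hinv 1 ltac:(lra)). pose proof (exp_pos alpha). nra.
Qed.


Lemma abs_sq x : Rabs x * Rabs x = x * x.
Proof. unfold Rabs; destruct (Rcase_abs x); ring. Qed.
Lemma abs_mul_le a b A B : Rabs a <= A -> Rabs b <= B -> Rabs (a*b) <= A*B.
Proof. intros. rewrite Rabs_mult. apply Rmult_le_compat; auto using Rabs_pos. Qed.
Lemma abs_add_le a b A B : Rabs a <= A -> Rabs b <= B -> Rabs (a+b) <= A+B.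
Proof. intros. eapply Rle_trans; [apply Rabs_triang| lra]. Qed.
Lemma abs_sub_le a b A B : Rabs a <= A -> Rabs b <= B -> Rabs (a-b) <= A+B.
Proof. intros. unfold Rminus. apply abs_add_le; auto. rewrite Rabs_Ropp; auto. Qed.
Lemma abs_opp_le a A : Rabs a <= A -> Rabs (-a) <= A.
Proof. rewrite Rabs_Ropp; auto. Qed.
Lemma abs_ub a A : Rabs a <= A -> a <= A.
Proof. intros; eapply Rle_trans; [apply Rle_abs|auto]. Qed.
Lemma abs_box a r : -r <= a <= r -> Rabs a <= r.
Proof. intros; apply Rabs_le; auto. Qed.
Lemma abs_nonneg a : 0 <= a -> Rabs a = a.
Proof. apply Rabs_pos_eq. Qed.
Lemma sq_lt_box v r : 0 < r -> v * v < r * r -> -r < v < r.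
Proof. intros; split; nra. Qed.
Lemma sq_sum_le a c : (a+c)*(a+c) <= 2*(a*a+c*c).
Proof. pose proof (Rle_0_sqr (a - c)). unfold Rsqr in *. nra. Qed.
Lemma sq_sum_ge a c : 0 <= a -> 0 <= c -> a*a+c*c <= (a+c)*(a+c).
Proof. intros. nra. Qed.
Lemma pm_b1 aa bb cc dd : 0 < aa*dd - bb*cc ->
  Rabs (aa*dd - bb*cc + dd*dd + cc*cc) <= (aa*dd - bb*cc) + (aa*aa + bb*bb + cc*cc + dd*dd).
Proof. intros. rewrite abs_nonneg by nra. nra. Qed.
Lemma pm_b2 aa bb cc dd : 0 < aa*dd - bb*cc ->
  Rabs (aa*dd - bb*cc + bb*bb + aa*aa) <= (aa*dd - bb*cc) + (aa*aa + bb*bb + cc*cc + dd*dd).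
Proof. intros. rewrite abs_nonneg by nra. nra. Qed.
Lemma pm_b3 aa bb cc dd : 0 < aa*dd - bb*cc ->
  Rabs (bb*dd + aa*cc) <= (aa*dd - bb*cc) + (aa*aa + bb*bb + cc*cc + dd*dd).
Proof. intros. apply abs_box.
  pose proof (Rle_0_sqr (bb - dd)). pose proof (Rle_0_sqr (bb + dd)).
  pose proof (Rle_0_sqr (aa - cc)). pose proof (Rle_0_sqr (aa + cc)). unfold Rsqr in *. split; nra. Qed.
Lemma quad_lemma A C t av s : 0 < t -> A*t >= 4*C*C + t -> 0 <= av ->
  -A*(av*av) + 2*(av*(C*s)) <= -(av*av) + (t/4)*(s*s).
Proof.
  intros Ht HA Hav.
  assert (0 <= t * (-(av*av) + (t/4)*(s*s) - (-A*(av*av) + 2*(av*(C*s))))).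
  { pose proof (Rle_0_sqr (2*C*av - t*s/2)). unfold Rsqr in *.
    assert (0 <= (A*t - 4*C*C - t)*(av*av)) by (apply Rmult_le_pos; nra).
    nra. }
  apply Rmult_le_reg_l with t; [exact Ht|]. nra.
Qed.
Lemma sq_le_box v r : 0 < r -> v * v <= r * r -> -r <= v <= r.
Proof. intros; split; nra. Qed.


Definition Wq (a b c d x y : R) : R :=
  (a*d - b*c)*(x*x+y*y) + (d*x-b*y)*(d*x-b*y) + (c*x-a*y)*(c*x-a*y).
Definition zq1 (a b c d x y : R) : R := (a*d - b*c + d*d + c*c)*x - (b*d + a*c)*y.
Definition zq2 (a b c d x y : R) : R := -(b*d + a*c)*x + (a*d - b*c + b*b + a*a)*y.
Definition Vf (K2 a b c d I5 M5 N5 B I M N : R) : R :=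
  B + K2*((I-I5)*(I-I5)) + Wq a b c d (M-M5) (N-N5).
Definition dVf (K2 a b c d I5 M5 N5 B I M N FB FI FM FN : R) : R :=
  FB + K2*(2*(I-I5)*FI) + (2*zq1 a b c d (M-M5) (N-N5)*FM + 2*zq2 a b c d (M-M5) (N-N5)*FN).

Lemma dcongr f x l l' : derivable_pt_lim f x l -> l = l' -> derivable_pt_lim f x l'.
Proof. intros H ->; exact H. Qed.
Lemma dadd f g x lf lg : derivable_pt_lim f x lf -> derivable_pt_lim g x lg ->
  derivable_pt_lim (fun t => f t + g t) x (lf + lg).
Proof. apply derivable_pt_lim_plus. Qed.
Lemma dsub f g x lf lg : derivable_pt_lim f x lf -> derivable_pt_lim g x lg ->
  derivable_pt_lim (fun t => f t - g t) x (lf - lg).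
Proof. apply derivable_pt_lim_minus. Qed.
Lemma dmul f g x lf lg : derivable_pt_lim f x lf -> derivable_pt_lim g x lg ->
  derivable_pt_lim (fun t => f t * g t) x (lf * g x + f x * lg).
Proof. apply derivable_pt_lim_mult. Qed.
Lemma dopp f x lf : derivable_pt_lim f x lf ->
  derivable_pt_lim (fun t => - f t) x (- lf).
Proof. apply derivable_pt_lim_opp. Qed.
Lemma dconst (c x : R) : derivable_pt_lim (fun _ => c) x 0.
Proof. apply derivable_pt_lim_const. Qed.

Lemma chainV (K2 a b c d I5 M5 N5 : R) (Bf If Mf Nf : R -> R) t FB FI FM FN :
  derivable_pt_lim Bf t FB -> derivable_pt_lim If t FI ->
  derivable_pt_lim Mf t FM -> derivable_pt_lim Nf t FN ->
  derivable_pt_lim (fun s => Vf K2 a b c d I5 M5 N5 (Bf s) (If s) (Mf s) (Nf s)) t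
    (dVf K2 a b c d I5 M5 N5 (Bf t) (If t) (Mf t) (Nf t) FB FI FM FN).
Proof.
  intros HB HI HM HN. unfold Vf, Wq.
  eapply dcongr.
  - repeat (first [apply dadd | apply dsub | apply dmul | apply dopp | apply dconst | eassumption]).
  - unfold dVf, zq1, zq2. ring.
Qed.


Lemma idM (b lam gam m mu r n p h beta delta e I5 M5 N5 B I M N : R) :
  h <> 0 -> I5 <> 0 -> B + I <> 0 ->
  fM b lam gam m mu r n p h beta delta e B I M N =
  fM b lam gam m mu r n p h beta delta e 0 I5 M5 N5
  + (r - n - p * (2 * M5 + N5) / (h * I5) - beta * I5 - delta * N5) * (M - M5)
  + (r - p * M5 / (h * I5) - delta * M5) * (N - N5)
  - p / (h * I5) * (M - M5) * ((M - M5) + (N - N5)) - delta * (M - M5) * (N - N5)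
  + p / (h * I5 * (B + I)) * (B + (I - I5)) * M * (M + N)
  - beta * (I - I5) * M - e * B * M.
Proof. intros. unfold fM. field. repeat split; auto. Qed.

Lemma idN (b lam gam m mu r n p h beta delta e I5 M5 N5 B I M N : R) :
  h <> 0 -> I5 <> 0 -> B + I <> 0 ->
  fN b lam gam m mu r n p h beta delta e B I M N =
  fN b lam gam m mu r n p h beta delta e 0 I5 M5 N5
  + (beta * I5 - p * N5 / (h * I5) + delta * N5) * (M - M5)
  + (delta * M5 - n - p * (M5 + 2 * N5) / (h * I5)) * (N - N5)
  - p / (h * I5) * (N - N5) * ((M - M5) + (N - N5)) + delta * (M - M5) * (N - N5)
  + p / (h * I5 * (B + I)) * (B + (I - I5)) * N * (M + N)
  + beta * (I - I5) * M - e * B * N.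
Proof. intros. unfold fN. field. repeat split; auto. Qed.

Lemma idI (b lam gam m mu r n p h beta delta e I5 B I M N : R) :
  I5 <> 0 -> B + I <> 0 -> m + mu = b / I5 ->
  fI b lam gam m mu r n p h beta delta e B I M N =
  - b * I / (I5 * (B + I)) * (B + (I - I5)) + B * (lam * N + gam * I).
Proof. intros H1 H2 H3. unfold fI. rewrite H3. field. auto. Qed.

Lemma idB (b lam gam m mu r n p h beta delta e B I M N : R) :
  fB b lam gam m mu r n p h beta delta e B I M N =
  B * (b / (B + I) - lam * N - gam * I - m).
Proof. unfold fB. unfold Rdiv. ring. Qed.


Lemma box_bound (b lam gam m beta delta e I5 M5 N5 aa bb cc dd q iI k K2 r0
                 B I M N iD FB FI FM FN : R) :
  0 < b -> 0 < lam -> 0 < gam -> 0 < beta -> 0 < delta -> 0 < e -> 0 < I5 ->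
  0 <= M5 -> 0 <= N5 -> 0 < q -> I5 * iI = 1 -> (B + I) * iD = 1 ->
  k = gam*I5 + m + lam*N5 - b*iI -> 0 < k ->
  aa + dd < 0 -> 0 < aa*dd - bb*cc -> 0 < K2 ->
  0 <= B <= r0 -> -r0 <= I - I5 <= r0 -> -r0 <= M - M5 <= r0 -> -r0 <= N - N5 <= r0 ->
  0 < r0 -> r0 <= I5/2 ->
  FB = B * (b*iD - lam*N - gam*I - m) ->
  FI = - b*I*iI*iD*(B + (I - I5)) + B*(lam*N + gam*I) ->
  FM = aa*(M-M5) + bb*(N-N5) - q*(M-M5)*((M-M5)+(N-N5)) - delta*(M-M5)*(N-N5)
       + q*iD*(B + (I-I5))*M*(M+N) - beta*(I-I5)*M - e*B*M ->
  FN = cc*(M-M5) + dd*(N-N5) - q*(N-N5)*((M-M5)+(N-N5)) + delta*(M-M5)*(N-N5)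
       + q*iD*(B + (I-I5))*N*(M+N) + beta*(I-I5)*M - e*B*N ->
  let Dl := aa*dd - bb*cc in
  let Pm := Dl + (aa*aa + bb*bb + cc*cc + dd*dd) in
  let tau := - (aa+dd) * Dl in
  let Mb := M5 + I5 in let Nb := N5 + I5 in let Sb := M5 + N5 + I5 in
  let sm := 2*q*iI in
  let Cv := lam*Nb + 2*gam*I5 + b*iI in
  let cg := lam + gam + 2*b*iI*iI in
  let Cu := 4*Pm*(Mb+Nb)*(sm*Sb+e) in
  let C3 := Pm*(sm*Sb*(Mb+Nb) + 2*beta*Mb) in
  r0 * cg <= k/4 -> r0 * (2*K2*Cv) <= k/4 -> r0 * Cu <= k/4 ->
  r0 * (8*Pm*(q+delta)) <= tau/4 ->
  K2*(b*iI/2)*tau >= 4*C3*C3 + tau ->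
  dVf K2 aa bb cc dd I5 M5 N5 B I M N FB FI FM FN <=
    -(k/4)*B - (I-I5)*(I-I5) - (tau/2)*((Rabs (M-M5) + Rabs (N-N5))*(Rabs (M-M5) + Rabs (N-N5))).
Proof.
  intros hb hlam hgam hbeta hdelta he hI5 hM5 hN5 hq HiI HiD Hk hk Htr HDl HK2
    HB Hv Hx Hy Hr0 Hr0I HFB HFI HFM HFN Dl Pm tau Mb Nb Sb sm Cv cg Cu C3
    Hc1 Hc2 Hc3 Hc4 HK.
  assert (HD : I5/2 <= B + I) by lra.
  assert (HD2 : B + I <= 2*I5) by lra.
  assert (HiI0 : 0 < iI) by nra.
  assert (HiD0 : 0 < iD) by nra.
  assert (HiDu : iD <= 2*iI).
  { assert (E : iD*(2*(B+I) - I5)*iI = 2*iI*((B+I)*iD) - iD*(I5*iI)) by ring.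
    rewrite HiD, HiI in E. assert (0 <= iD*(2*(B+I) - I5)*iI).
    { apply Rmult_le_pos; [apply Rmult_le_pos|]; lra. } lra. }
  assert (HiDl : iI/2 <= iD).
  { assert (E : iD*(2*I5 - (B+I))*iI = 2*iD*(I5*iI) - iI*((B+I)*iD)) by ring.
    rewrite HiD, HiI in E. assert (0 <= iD*(2*I5 - (B+I))*iI).
    { apply Rmult_le_pos; [apply Rmult_le_pos|]; lra. } lra. }
  assert (Hw1 : I*iD <= 1).
  { assert (E : iD*((B+I) - I) = (B+I)*iD - I*iD) by ring. rewrite HiD in E.
    assert (0 <= iD*((B+I) - I)) by (apply Rmult_le_pos; lra). lra. }
  assert (Hw0 : 1/4 <= I*iD).
  { assert (I5/2 <= I) by lra.
    assert ((I5/2)*(iI/2) <= I*iD) by (apply Rmult_le_compat; lra).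
    assert ((I5/2)*(iI/2) = (I5*iI)/4) by field. lra. }
  assert (HgB : b*iD - lam*N - gam*I - m <= -k + r0*cg).
  { assert (E : iD*iI*(I5 - (B+I)) = iD*(I5*iI) - iI*((B+I)*iD)) by ring.
    rewrite HiD, HiI in E.
    assert (E2 : b*iD*iI*(I5 - (B+I)) <= b*(2*iI)*iI*r0).
    { assert (I5 - (B+I) <= r0) by lra.
      destruct (Rle_dec 0 (I5 - (B+I))).
      - apply Rmult_le_compat; try lra.
        + apply Rmult_le_pos; [apply Rmult_le_pos|]; lra.
        + apply Rmult_le_compat; try lra; nra.
      - assert (b*iD*iI*(I5 - (B+I)) <= 0).
        { assert (0 < b*iD*iI) by (apply Rmult_lt_0_compat; [apply Rmult_lt_0_compat|]; lra). nra. }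
        assert (0 <= b*(2*iI)*iI*r0) by (apply Rmult_le_pos; [apply Rmult_le_pos|]; nra).
        lra. }
    unfold cg. rewrite Hk. nra. }
  assert (HFBb : FB <= B*(-k + r0*cg)).
  { rewrite HFB. apply Rmult_le_compat_l; lra. }
  set (v := I - I5) in *.
  assert (HvI : I = I5 + v) by (unfold v; ring).
  set (w := I*iD) in *.
  set (Z := lam*N + gam*I - b*iI*w).
  assert (HFIe : 2*v*FI = -2*b*iI*w*(v*v) + 2*B*(v*Z)).
  { rewrite HFI. unfold Z, w. ring. }
  assert (HZ : Rabs Z <= Cv).
  { unfold Z, Cv. apply abs_sub_le; [apply abs_add_le|].
    - rewrite Rabs_mult, (abs_nonneg lam) by lra. apply Rmult_le_compat_l; [lra|].
      apply abs_box. unfold Nb. lra.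
    - rewrite Rabs_mult, (abs_nonneg gam) by lra.
      replace (2*gam*I5) with (gam*(2*I5)) by ring. apply Rmult_le_compat_l; [lra|].
      apply abs_box. lra.
    - rewrite Rabs_mult, (abs_nonneg (b*iI)) by nra. rewrite abs_nonneg by lra.
      assert (0 < b*iI) by nra. nra. }
  assert (HvZ : v*Z <= r0*Cv).
  { apply abs_ub. apply abs_mul_le; [apply abs_box; lra| exact HZ]. }
  assert (HFIb : 2*v*FI <= -(b*iI/2)*(v*v) + 2*B*(r0*Cv)).
  { rewrite HFIe.
    assert (0 <= b*iI*(v*v)*(2*w - 1/2)).
    { apply Rmult_le_pos; [|lra]. apply Rmult_le_pos; [nra| nra]. }
    assert (B*(v*Z) <= B*(r0*Cv)) by (apply Rmult_le_compat_l; lra).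
    nra. }
  set (x := M - M5) in *. set (y := N - N5) in *.
  assert (HMx : M = M5 + x) by (unfold x; ring).
  assert (HNy : N = N5 + y) by (unfold y; ring).
  set (z1 := zq1 aa bb cc dd x y). set (z2 := zq2 aa bb cc dd x y).
  set (sg := q*iD). set (S := M + N). set (J := z1*M + z2*N).
  set (Q2 := z1*(-q*x*(x+y) - delta*x*y) + z2*(-q*y*(x+y) + delta*x*y)).
  assert (HZe : 2*z1*FM + 2*z2*FN = 2*((aa+dd)*Dl)*(x*x+y*y) + 2*Q2
            + 2*B*(J*(sg*S - e)) + 2*v*(sg*S*J + beta*M*(z2 - z1))).
  { rewrite HFM, HFN. unfold Q2, J, S, sg, Dl, z1, z2, zq1, zq2. ring. }
  set (s := Rabs x + Rabs y).
  assert (Hax : Rabs x <= r0) by (apply abs_box; lra).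
  assert (Hay : Rabs y <= r0) by (apply abs_box; lra).
  assert (Hav : Rabs v <= r0) by (apply abs_box; lra).
  pose proof (Rabs_pos x). pose proof (Rabs_pos y). pose proof (Rabs_pos v).
  assert (Hs0 : 0 <= s) by (unfold s; lra).
  assert (Hs2 : s <= 2*r0) by (unfold s; lra).
  assert (Hxs : Rabs x <= s) by (unfold s; lra).
  assert (Hys : Rabs y <= s) by (unfold s; lra).
  assert (Hom1 : s*s <= 2*(x*x+y*y)).
  { unfold s. rewrite <- (abs_sq x), <- (abs_sq y). apply sq_sum_le. }
  assert (Hom2 : x*x+y*y <= s*s).
  { unfold s. rewrite <- (abs_sq x), <- (abs_sq y). apply sq_sum_ge; auto. }
  assert (HDl0 : 0 < Dl) by exact HDl.
  assert (HPm1 := pm_b1 aa bb cc dd HDl). assert (HPm2 := pm_b2 aa bb cc dd HDl).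
  assert (HPm3 := pm_b3 aa bb cc dd HDl). fold Dl Pm in HPm1, HPm2, HPm3.
  assert (HPm3' : Rabs (-(bb*dd + aa*cc)) <= Pm) by (rewrite Rabs_Ropp; exact HPm3).
  assert (Hz1 : Rabs z1 <= Pm*s).
  { unfold z1, zq1. fold Dl.
    replace (Pm*s) with (Pm*Rabs x + Pm*Rabs y) by (unfold s; ring).
    apply abs_sub_le; apply abs_mul_le; auto; lra. }
  assert (Hz2 : Rabs z2 <= Pm*s).
  { unfold z2, zq2. fold Dl.
    replace (Pm*s) with (Pm*Rabs x + Pm*Rabs y) by (unfold s; ring).
    apply abs_add_le; apply abs_mul_le; auto; lra. }
  assert (Hxy : Rabs (x+y) <= s) by (unfold s; apply Rabs_triang).
  assert (HR2M : Rabs (-q*x*(x+y) - delta*x*y) <= (q+delta)*(s*s)).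
  { replace ((q+delta)*(s*s)) with (q*s*s + delta*s*s) by ring.
    apply abs_sub_le.
    - apply abs_mul_le; auto. apply abs_mul_le; auto. rewrite Rabs_Ropp, abs_nonneg; lra.
    - apply abs_mul_le; auto. apply abs_mul_le; auto. rewrite abs_nonneg; lra. }
  assert (HR2N : Rabs (-q*y*(x+y) + delta*x*y) <= (q+delta)*(s*s)).
  { replace ((q+delta)*(s*s)) with (q*s*s + delta*s*s) by ring.
    apply abs_add_le.
    - apply abs_mul_le; auto. apply abs_mul_le; auto. rewrite Rabs_Ropp, abs_nonneg; lra.
    - apply abs_mul_le; auto. apply abs_mul_le; auto. rewrite abs_nonneg; lra. }
  assert (HQ2a : Rabs Q2 <= 2*Pm*(q+delta)*(s*(s*s))).
  { unfold Q2. replace (2*Pm*(q+delta)*(s*(s*s))) with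
      ((Pm*s)*((q+delta)*(s*s)) + (Pm*s)*((q+delta)*(s*s))) by ring.
    apply abs_add_le; apply abs_mul_le; auto. }
  assert (HPm0 : 0 < Pm) by (unfold Pm; clear - HDl0; nra).
  assert (HQ2 : Q2 <= 4*Pm*(q+delta)*r0*(s*s)).
  { apply abs_ub in HQ2a. eapply Rle_trans; [exact HQ2a|].
    assert (0 <= 2*Pm*(q+delta)*(s*s)) by (clear - HPm0 hq hdelta Hs0; 
      apply Rmult_le_pos; [apply Rmult_le_pos|]; nra).
    clear - H2 Hs2. nra. }
  assert (HMb : Rabs M <= Mb) by (apply abs_box; unfold Mb; lra).
  assert (HNb : Rabs N <= Nb) by (apply abs_box; unfold Nb; lra).
  assert (HSb : Rabs S <= Sb) by (apply abs_box; unfold Sb, S; lra).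
  assert (Hsg0 : 0 < sg) by (unfold sg; clear - hq HiD0; nra).
  assert (Hsg : sg <= sm) by (unfold sg, sm; clear - hq HiDu; nra).
  assert (HJ : Rabs J <= Pm*s*(Mb+Nb)).
  { unfold J. replace (Pm*s*(Mb+Nb)) with (Pm*s*Mb + Pm*s*Nb) by ring.
    apply abs_add_le; apply abs_mul_le; auto. }
  assert (HsgS : Rabs (sg*S - e) <= sm*Sb + e).
  { apply abs_sub_le. apply abs_mul_le; auto. rewrite abs_nonneg; lra.
    rewrite abs_nonneg; lra. }
  assert (HBJ : 2*B*(J*(sg*S - e)) <= B*(r0*Cu)).
  { assert (Rabs (J*(sg*S - e)) <= Pm*s*(Mb+Nb)*(sm*Sb+e)) by (apply abs_mul_le; auto).
    apply abs_ub in H2.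
    assert (Pm*s*(Mb+Nb)*(sm*Sb+e) <= r0*Cu/2).
    { unfold Cu. assert (0 <= Pm*(Mb+Nb)*(sm*Sb+e)).
      { assert (0 < Mb + Nb) by (unfold Mb, Nb; lra).
        assert (0 <= sm*Sb) by (apply Rmult_le_pos; [lra| unfold Sb; lra]).
        apply Rmult_le_pos; [apply Rmult_le_pos|]; lra. }
      clear - H3 Hs2. nra. }
    clear - H2 H3 HB. nra. }
  assert (HV3 : Rabs (sg*S*J + beta*M*(z2 - z1)) <= C3*s).
  { unfold C3. replace (Pm*(sm*Sb*(Mb+Nb) + 2*beta*Mb)*s) with
      (sm*Sb*(Pm*s*(Mb+Nb)) + beta*Mb*(Pm*s + Pm*s)) by ring.
    apply abs_add_le. apply abs_mul_le; auto. apply abs_mul_le; auto. rewrite abs_nonneg; lra.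
    apply abs_mul_le; auto. apply abs_mul_le; auto. rewrite abs_nonneg; lra.
    apply abs_sub_le; auto. }
  assert (HV3b : 2*v*(sg*S*J + beta*M*(z2 - z1)) <= 2*(Rabs v*(C3*s))).
  { assert (Rabs (v*(sg*S*J + beta*M*(z2 - z1))) <= Rabs v*(C3*s))
      by (apply abs_mul_le; auto; lra).
    apply abs_ub in H2. lra. }
  assert (Htau : 0 < tau) by (unfold tau; clear - Htr HDl0; nra).
  assert (HQ : -(K2*(b*iI/2))*(Rabs v*Rabs v) + 2*(Rabs v*(C3*s)) <= -(Rabs v*Rabs v) + (tau/4)*(s*s)).
  { apply quad_lemma; auto. }
  rewrite abs_sq in HQ.
  assert (HFIK : K2*(2*v*FI) <= K2*(-(b*iI/2)*(v*v) + 2*B*(r0*Cv))).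
  { apply Rmult_le_compat_l; lra. }
  assert (Hc1' : B*(r0*cg) <= B*(k/4)) by (apply Rmult_le_compat_l; lra).
  assert (Hc2' : B*(r0*(2*K2*Cv)) <= B*(k/4)) by (apply Rmult_le_compat_l; lra).
  assert (Hc3' : B*(r0*Cu) <= B*(k/4)) by (apply Rmult_le_compat_l; lra).
  assert (Hss : 0 <= s*s) by (apply Rmult_le_pos; lra).
  assert (Hc4' : (s*s)*(r0*(8*Pm*(q+delta))) <= (s*s)*(tau/4)) by (apply Rmult_le_compat_l; lra).
  assert (Hlin : 2*((aa+dd)*Dl)*(x*x+y*y) <= -tau*(s*s)).
  { unfold tau. assert (0 <= tau*(2*(x*x+y*y) - s*s)) by (apply Rmult_le_pos; lra).
    unfold tau in H2. lra. }
  unfold dVf. change (I - I5) with v. change (M - M5) with x. change (N - N5) with y.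
  change (zq1 aa bb cc dd x y) with z1. change (zq2 aa bb cc dd x y) with z2.
  change (Rabs x + Rabs y) with s.
  rewrite HZe.
  clear - HFBb HFIK HBJ HQ2 HV3b HQ Hc1' Hc2' Hc3' Hc4' Hlin.
  nra.
Qed.


Lemma le_div_mul r X Y : 0 < X -> 0 <= r -> r <= Y / X -> r * X <= Y.
Proof. intros HX Hr H. apply Rmult_le_compat_r with (r := X) in H; [|lra].
  replace (Y / X * X) with Y in H by (field; lra). exact H. Qed.

Lemma Wq_lower aa bb cc dd x y : 0 < aa*dd - bb*cc ->
  (aa*dd - bb*cc)*(x*x + y*y) <= Wq aa bb cc dd x y.
Proof. intros. unfold Wq.
  pose proof (Rle_0_sqr (dd*x - bb*y)). pose proof (Rle_0_sqr (cc*x - aa*y)).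
  unfold Rsqr in *. lra. Qed.

Lemma Wq_upper aa bb cc dd x y :
  Wq aa bb cc dd x y <= ((aa*dd - bb*cc) + 2*(aa*aa+bb*bb+cc*cc+dd*dd))*(x*x + y*y).
Proof. unfold Wq.
  pose proof (sq_sum_le (dd*x) (-(bb*y))). pose proof (sq_sum_le (cc*x) (-(aa*y))).
  assert (0 <= aa*aa*(x*x)) by nra. assert (0 <= bb*bb*(x*x)) by nra.
  assert (0 <= cc*cc*(y*y)) by nra. assert (0 <= dd*dd*(y*y)) by nra.
  nra. Qed.

Lemma V_box K2 aa bb cc dd I5 M5 N5 B I M N r :
  0 < K2 -> 0 < aa*dd - bb*cc -> 0 < r -> 0 <= B ->
  Vf K2 aa bb cc dd I5 M5 N5 B I M N <= Rmin r (Rmin (K2*(r*r)) ((aa*dd-bb*cc)*(r*r))) ->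
  B <= r /\ -r <= I - I5 <= r /\ -r <= M - M5 <= r /\ -r <= N - N5 <= r.
Proof.
  intros HK HD Hr HB HV.
  pose proof (Rmin_l r (Rmin (K2*(r*r)) ((aa*dd-bb*cc)*(r*r)))).
  pose proof (Rmin_r r (Rmin (K2*(r*r)) ((aa*dd-bb*cc)*(r*r)))).
  pose proof (Rmin_l (K2*(r*r)) ((aa*dd-bb*cc)*(r*r))).
  pose proof (Rmin_r (K2*(r*r)) ((aa*dd-bb*cc)*(r*r))).
  set (mn := Rmin r (Rmin (K2*(r*r)) ((aa*dd-bb*cc)*(r*r)))) in *.
  pose proof (Wq_lower aa bb cc dd (M-M5) (N-N5) HD).
  unfold Vf in HV.
  set (Dl := aa*dd - bb*cc) in *.
  set (W := Wq aa bb cc dd (M-M5) (N-N5)) in *.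
  set (v := I - I5) in *. set (x := M - M5) in *. set (y := N - N5) in *.
  assert (0 <= K2*(v*v)) by (apply Rmult_le_pos; nra).
  assert (0 <= Dl*(x*x+y*y)) by (apply Rmult_le_pos; nra).
  assert (Hv : v*v <= r*r).
  { apply Rmult_le_reg_l with K2; [lra|]. lra. }
  assert (Hxy : x*x + y*y <= r*r).
  { apply Rmult_le_reg_l with Dl; [lra|]. lra. }
  assert (x*x <= r*r) by (pose proof (Rle_0_sqr y); unfold Rsqr in *; lra).
  assert (y*y <= r*r) by (pose proof (Rle_0_sqr x); unfold Rsqr in *; lra).
  split; [lra|]. split; [|split]; apply sq_le_box; auto.
Qed.

Lemma V_nonneg K2 aa bb cc dd I5 M5 N5 B I M N :
  0 < K2 -> 0 < aa*dd - bb*cc -> 0 <= B -> 0 <= Vf K2 aa bb cc dd I5 M5 N5 B I M N.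
Proof. intros. unfold Vf. pose proof (Wq_lower aa bb cc dd (M-M5) (N-N5) H0).
  assert (0 <= K2*((I-I5)*(I-I5))) by (apply Rmult_le_pos; [lra| apply Rle_0_sqr]).
  assert (0 <= (aa*dd-bb*cc)*((M-M5)*(M-M5)+(N-N5)*(N-N5)))
    by (apply Rmult_le_pos; [lra| apply Rplus_le_le_0_compat; apply Rle_0_sqr]).
  lra. Qed.

Lemma V_big K2 aa bb cc dd I5 M5 N5 :
  0 < K2 -> 0 < aa*dd - bb*cc ->
  forall eps, 0 < eps -> exists rho, 0 < rho /\ forall B I M N, 0 <= B ->
    Vf K2 aa bb cc dd I5 M5 N5 B I M N < rho -> dist4 B I M N 0 I5 M5 N5 < eps.
Proof.
  intros HK HD eps He.
  set (r := eps/5).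
  exists (Rmin r (Rmin (K2*(r*r)) ((aa*dd-bb*cc)*(r*r)))).
  split.
  { unfold r. repeat apply Rmin_pos; try apply Rmult_lt_0_compat; try lra; nra. }
  intros B I M N HB HV.
  destruct (V_box K2 aa bb cc dd I5 M5 N5 B I M N r HK HD ltac:(unfold r; lra) HB ltac:(lra))
    as [h1 [h2 [h3 h4]]].
  unfold dist4. rewrite Rminus_0_r, (abs_nonneg B) by lra.
  pose proof (abs_box _ _ h2). pose proof (abs_box _ _ h3). pose proof (abs_box _ _ h4).
  unfold r in *. lra.
Qed.

Lemma V_small K2 aa bb cc dd I5 M5 N5 :
  0 < K2 -> 0 < aa*dd - bb*cc ->
  forall rho, 0 < rho -> exists d, 0 < d /\ forall B I M N, 0 <= B ->
    dist4 B I M N 0 I5 M5 N5 < d -> Vf K2 aa bb cc dd I5 M5 N5 B I M N < rho.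
Proof.
  intros HK HD rho Hr.
  set (Wb := (aa*dd - bb*cc) + 2*(aa*aa+bb*bb+cc*cc+dd*dd)).
  assert (HWb : 0 < Wb) by (unfold Wb; nra).
  set (Cst := 1 + K2 + 2*Wb).
  assert (HC : 0 < Cst) by (unfold Cst; lra).
  exists (Rmin 1 (rho/Cst)). split.
  { apply Rmin_pos; [lra| apply Rdiv_lt_0_compat; lra]. }
  intros B I M N HB Hd.
  pose proof (Rmin_l 1 (rho/Cst)). pose proof (Rmin_r 1 (rho/Cst)).
  set (d := Rmin 1 (rho/Cst)) in *.
  unfold dist4 in Hd. rewrite Rminus_0_r, (abs_nonneg B) in Hd by lra.
  pose proof (Rabs_pos (I - I5)). pose proof (Rabs_pos (M - M5)). pose proof (Rabs_pos (N - N5)).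
  pose proof (abs_sq (I - I5)). pose proof (abs_sq (M - M5)). pose proof (abs_sq (N - N5)).
  set (av := Rabs (I - I5)) in *. set (ax := Rabs (M - M5)) in *. set (ay := Rabs (N - N5)) in *.
  assert (Hv : (I-I5)*(I-I5) <= d) by nra.
  assert (Hxy : (M-M5)*(M-M5) + (N-N5)*(N-N5) <= 2*d) by nra.
  unfold Vf. pose proof (Wq_upper aa bb cc dd (M-M5) (N-N5)) as HWq. fold Wb in HWq.
  assert (K2*((I-I5)*(I-I5)) <= K2*d) by (apply Rmult_le_compat_l; lra).
  assert (Wb*((M-M5)*(M-M5) + (N-N5)*(N-N5)) <= Wb*(2*d)) by (apply Rmult_le_compat_l; lra).
  assert (HCd : Cst * d <= rho).
  { unfold d. apply Rmult_le_reg_r with (/Cst). apply Rinv_0_lt_compat; lra.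
    replace (Cst * Rmin 1 (rho/Cst) * /Cst) with (Rmin 1 (rho/Cst)) by (field; lra).
    exact H0. }
  unfold Cst in HCd. lra.
Qed.


Definition Ea r n p h beta delta I5 M5 N5 := r - n - p * (2 * M5 + N5) / (h * I5) - beta * I5 - delta * N5.
Definition Eb r p h delta I5 M5 := r - p * M5 / (h * I5) - delta * M5.
Definition Ec p h beta delta I5 N5 := beta * I5 - p * N5 / (h * I5) + delta * N5.
Definition Ed n p h delta I5 M5 N5 := delta * M5 - n - p * (M5 + 2 * N5) / (h * I5).

Lemma core (b lam gam m mu r n p h beta delta e : R)
  (hb : 0 < b) (hlam : 0 < lam) (hgam : 0 < gam) (hm : 0 < m) (hmu : 0 < mu)
  (hr : 0 < r) (hn : 0 < n) (hp : 0 < p) (hh : 0 < h) (hbeta : 0 < beta)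
  (hdelta : 0 < delta) (he : 0 < e)
  (I5 M5 N5 : R) (hI5 : 0 < I5) (hM5 : 0 <= M5) (hN5 : 0 <= N5)
  (heq : is_equilibrium b lam gam m mu r n p h beta delta e 0 I5 M5 N5)
  (c1 : b / I5 < gam * I5 + m + lam * N5)
  (c2 : 2 * n + 3 * p * (M5 + N5) / (h * I5) + beta * I5 + delta * N5
          > r + delta * M5)
  (c3 : (r - n - p * (2 * M5 + N5) / (h * I5) - beta * I5 - delta * N5)
          * (delta * M5 - n - p * (M5 + 2 * N5) / (h * I5))
        + (beta * I5 - p * N5 / (h * I5) + delta * N5)
          * (p * M5 / (h * I5) + delta * M5 - r) > 0) :
  exists K2 alpha rho0, 0 < K2 /\ 0 < alpha /\ 0 < rho0 /\
    0 < Ea r n p h beta delta I5 M5 N5 * Ed n p h delta I5 M5 N5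
        - Eb r p h delta I5 M5 * Ec p h beta delta I5 N5 /\
    forall B I M N, 0 <= B ->
      Vf K2 (Ea r n p h beta delta I5 M5 N5) (Eb r p h delta I5 M5)
         (Ec p h beta delta I5 N5) (Ed n p h delta I5 M5 N5) I5 M5 N5 B I M N < rho0 ->
      dVf K2 (Ea r n p h beta delta I5 M5 N5) (Eb r p h delta I5 M5)
         (Ec p h beta delta I5 N5) (Ed n p h delta I5 M5 N5) I5 M5 N5 B I M N
         (fB b lam gam m mu r n p h beta delta e B I M N)
         (fI b lam gam m mu r n p h beta delta e B I M N)
         (fM b lam gam m mu r n p h beta delta e B I M N)
         (fN b lam gam m mu r n p h beta delta e B I M N)
      <= - alpha * Vf K2 (Ea r n p h beta delta I5 M5 N5) (Eb r p h delta I5 M5)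
         (Ec p h beta delta I5 N5) (Ed n p h delta I5 M5 N5) I5 M5 N5 B I M N.
Proof.
  destruct heq as [heB [heI [heM heN]]].
  assert (hmmu : m + mu = b / I5).
  { unfold fI in heI. replace (b * I5 / (0 + I5)) with b in heI by (field; lra).
    apply Rmult_eq_reg_r with I5; [|lra]. field_simplify; lra. }
  set (aa := Ea r n p h beta delta I5 M5 N5).
  set (bb := Eb r p h delta I5 M5).
  set (cc := Ec p h beta delta I5 N5).
  set (dd := Ed n p h delta I5 M5 N5).
  assert (HDl : 0 < aa*dd - bb*cc).
  { replace (aa*dd - bb*cc) with
     ((r - n - p * (2 * M5 + N5) / (h * I5) - beta * I5 - delta * N5)
          * (delta * M5 - n - p * (M5 + 2 * N5) / (h * I5))
        + (beta * I5 - p * N5 / (h * I5) + delta * N5)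
          * (p * M5 / (h * I5) + delta * M5 - r)) by (unfold aa, bb, cc, dd, Ea, Eb, Ec, Ed; ring).
    lra. }
  assert (Htr : aa + dd < 0).
  { replace (aa + dd) with (r + delta * M5 - (2 * n + 3 * p * (M5 + N5) / (h * I5) + beta * I5 + delta * N5))
      by (unfold aa, dd, Ea, Ed; field; lra). lra. }
  set (iI := / I5).
  assert (HiI : I5 * iI = 1) by (unfold iI; field; lra).
  assert (HiI0 : 0 < iI) by (unfold iI; apply Rinv_0_lt_compat; lra).
  set (k := gam*I5 + m + lam*N5 - b*iI).
  assert (hk : 0 < k) by (unfold k, iI; unfold Rdiv in c1; lra).
  set (q := p / (h * I5)).
  assert (hq : 0 < q) by (unfold q; apply Rdiv_lt_0_compat; [lra| apply Rmult_lt_0_compat; lra]).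
  set (Dl := aa*dd - bb*cc) in *.
  set (Pm := Dl + (aa*aa + bb*bb + cc*cc + dd*dd)).
  set (tau := - (aa+dd) * Dl).
  set (Mb := M5 + I5). set (Nb := N5 + I5). set (Sb := M5 + N5 + I5).
  set (sm := 2*q*iI).
  set (Cv := lam*Nb + 2*gam*I5 + b*iI).
  set (cg := lam + gam + 2*b*iI*iI).
  set (Cu := 4*Pm*(Mb+Nb)*(sm*Sb+e)).
  set (C3 := Pm*(sm*Sb*(Mb+Nb) + 2*beta*Mb)).
  assert (HPm : 0 < Pm) by (unfold Pm; nra).
  assert (Htau : 0 < tau) by (unfold tau; nra).
  assert (Hsm : 0 < sm) by (unfold sm; nra).
  assert (HCv : 0 < Cv) by (unfold Cv, Nb; nra).
  assert (Hcg : 0 < cg) by (unfold cg; nra).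
  assert (HCu : 0 < Cu).
  { unfold Cu. assert (0 < Mb+Nb) by (unfold Mb, Nb; lra).
    assert (0 < sm*Sb + e) by (unfold Sb; nra). 
    apply Rmult_lt_0_compat; [|lra]. apply Rmult_lt_0_compat; [|lra]. lra. }
  assert (HbiI : 0 < b*iI/2) by nra.
  set (K2 := (4*C3*C3 + tau)/(tau*(b*iI/2))).
  assert (HK2 : 0 < K2).
  { unfold K2. apply Rdiv_lt_0_compat; [nra| apply Rmult_lt_0_compat; lra]. }
  assert (HK2e : K2*(b*iI/2)*tau >= 4*C3*C3 + tau).
  { unfold K2. right. field. lra. }
  set (r0 := Rmin (I5/2) (Rmin (k/4/cg) (Rmin (k/4/(2*K2*Cv)) (Rmin (k/4/Cu) (tau/4/(8*Pm*(q+delta))))))).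
  assert (Hr0 : 0 < r0).
  { unfold r0. repeat apply Rmin_pos; try lra; apply Rdiv_lt_0_compat; try lra; nra. }
  assert (Hr0a : r0 <= I5/2) by (unfold r0; apply Rmin_l).
  assert (Hr0b : r0 <= k/4/cg) by (unfold r0; eapply Rle_trans; [apply Rmin_r| apply Rmin_l]).
  assert (Hr0c : r0 <= k/4/(2*K2*Cv)) by (unfold r0; eapply Rle_trans; [apply Rmin_r|];
     eapply Rle_trans; [apply Rmin_r| apply Rmin_l]).
  assert (Hr0d : r0 <= k/4/Cu) by (unfold r0; eapply Rle_trans; [apply Rmin_r|];
     eapply Rle_trans; [apply Rmin_r|]; eapply Rle_trans; [apply Rmin_r| apply Rmin_l]).
  assert (Hr0e : r0 <= tau/4/(8*Pm*(q+delta))) by (unfold r0; eapply Rle_trans; [apply Rmin_r|];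
     eapply Rle_trans; [apply Rmin_r|]; eapply Rle_trans; [apply Rmin_r| apply Rmin_r]).
  apply le_div_mul in Hr0b; [|lra|lra].
  apply le_div_mul in Hr0c; [|nra|lra].
  apply le_div_mul in Hr0d; [|lra|lra].
  apply le_div_mul in Hr0e; [|nra|lra].
  set (Wb := Dl + 2*(aa*aa+bb*bb+cc*cc+dd*dd)).
  assert (HWb : 0 < Wb) by (unfold Wb; nra).
  set (alpha := Rmin (k/4) (Rmin (/K2) (tau/(2*Wb)))).
  assert (Hal : 0 < alpha).
  { unfold alpha. repeat apply Rmin_pos; try lra. apply Rinv_0_lt_compat; lra.
    apply Rdiv_lt_0_compat; lra. }
  assert (Hal1 : alpha <= k/4) by (unfold alpha; apply Rmin_l).
  assert (Hal2 : alpha * K2 <= 1).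
  { assert (alpha <= /K2) by (unfold alpha; eapply Rle_trans; [apply Rmin_r| apply Rmin_l]).
    apply le_div_mul; [lra|lra|]. unfold Rdiv; lra. }
  assert (Hal3 : alpha * Wb <= tau/2).
  { assert (alpha <= tau/(2*Wb)) by (unfold alpha; eapply Rle_trans; [apply Rmin_r| apply Rmin_r]).
    apply le_div_mul; [lra|lra|]. replace (tau/2/Wb) with (tau/(2*Wb)) by (field; lra). lra. }
  exists K2, alpha, (Rmin r0 (Rmin (K2*(r0*r0)) (Dl*(r0*r0)))).
  split; [exact HK2|]. split; [exact Hal|]. split.
  { assert (0 < r0*r0) by (apply Rmult_lt_0_compat; lra).
    apply Rmin_pos; [lra| apply Rmin_pos; apply Rmult_lt_0_compat; lra]. }
  split; [exact HDl|].
  intros B I M N HB HV.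
  destruct (V_box K2 aa bb cc dd I5 M5 N5 B I M N r0 HK2 HDl Hr0 HB (Rlt_le _ _ HV))
    as [hbB [hbv [hbx hby]]].
  assert (HBI : B + I <> 0) by lra.
  set (iD := / (B + I)).
  assert (HiD : (B + I) * iD = 1) by (unfold iD; field; lra).
  assert (HFB : fB b lam gam m mu r n p h beta delta e B I M N =
     B * (b*iD - lam*N - gam*I - m)).
  { rewrite idB. unfold iD. unfold Rdiv. ring. }
  assert (HFI : fI b lam gam m mu r n p h beta delta e B I M N =
     - b*I*iI*iD*(B + (I - I5)) + B*(lam*N + gam*I)).
  { rewrite (idI b lam gam m mu r n p h beta delta e I5 B I M N) by (auto; lra).
    unfold iI, iD. field. split; lra. }
  assert (HFM : fM b lam gam m mu r n p h beta delta e B I M N =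
     aa*(M-M5) + bb*(N-N5) - q*(M-M5)*((M-M5)+(N-N5)) - delta*(M-M5)*(N-N5)
       + q*iD*(B + (I-I5))*M*(M+N) - beta*(I-I5)*M - e*B*M).
  { rewrite (idM b lam gam m mu r n p h beta delta e I5 M5 N5 B I M N) by lra.
    rewrite heM. unfold aa, bb, Ea, Eb, q, iD. field. repeat split; lra. }
  assert (HFN : fN b lam gam m mu r n p h beta delta e B I M N =
     cc*(M-M5) + dd*(N-N5) - q*(N-N5)*((M-M5)+(N-N5)) + delta*(M-M5)*(N-N5)
       + q*iD*(B + (I-I5))*N*(M+N) + beta*(I-I5)*M - e*B*N).
  { rewrite (idN b lam gam m mu r n p h beta delta e I5 M5 N5 B I M N) by lra.
    rewrite heN. unfold cc, dd, Ec, Ed, q, iD. field. repeat split; lra. }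
  assert (Hbd := box_bound b lam gam m beta delta e I5 M5 N5 aa bb cc dd q iI k K2 r0 B I M N iD
     _ _ _ _ hb hlam hgam hbeta hdelta he hI5 hM5 hN5 hq HiI HiD eq_refl hk Htr HDl HK2
     ltac:(lra) hbv hbx hby Hr0 Hr0a HFB HFI HFM HFN Hr0b Hr0c Hr0d Hr0e HK2e).
  eapply Rle_trans; [exact Hbd|]. cbv zeta.
  fold Dl. fold tau.
  set (s := Rabs (M - M5) + Rabs (N - N5)).
  assert (Hom : (M-M5)*(M-M5) + (N-N5)*(N-N5) <= s*s).
  { unfold s. rewrite <- (abs_sq (M-M5)), <- (abs_sq (N-N5)).
    apply sq_sum_ge; apply Rabs_pos. }
  pose proof (Wq_upper aa bb cc dd (M-M5) (N-N5)) as HWq. fold Dl Wb in HWq.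
  unfold Vf.
  set (vv := (I-I5)*(I-I5)). assert (Hvv : 0 <= vv) by apply Rle_0_sqr.
  set (W := Wq aa bb cc dd (M - M5) (N - N5)) in *.
  assert (HW0 : 0 <= W).
  { pose proof (Wq_lower aa bb cc dd (M-M5) (N-N5) HDl) as HL. fold Dl W in HL.
    assert (0 <= Dl*((M-M5)*(M-M5)+(N-N5)*(N-N5))) by (apply Rmult_le_pos; [lra| apply Rplus_le_le_0_compat; apply Rle_0_sqr]). lra. }
  assert (HW1 : W <= Wb*(s*s)).
  { eapply Rle_trans; [exact HWq|]. apply Rmult_le_compat_l; lra. }
  assert (E1 : alpha*B <= (k/4)*B) by (apply Rmult_le_compat_r; lra).
  assert (E2 : alpha*(K2*vv) <= vv) by (rewrite <- Rmult_assoc; 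
     apply Rle_trans with (1*vv); [apply Rmult_le_compat_r; lra| lra]).
  assert (E3 : alpha*W <= (tau/2)*(s*s)).
  { apply Rle_trans with (alpha*(Wb*(s*s))). apply Rmult_le_compat_l; lra.
    rewrite <- Rmult_assoc. apply Rmult_le_compat_r; [apply Rle_0_sqr| lra]. }
  assert (E : alpha*(B + K2*vv + W) = alpha*B + alpha*(K2*vv) + alpha*W) by ring.
  lra.
Qed.


Lemma dist4_tri B I M N B1 I1 M1 N1 B0 I0 M0 N0 :
  dist4 B I M N B0 I0 M0 N0 <= dist4 B I M N B1 I1 M1 N1 + dist4 B1 I1 M1 N1 B0 I0 M0 N0.
Proof.
  unfold dist4.
  pose proof (R_dist_tri B B0 B1). pose proof (R_dist_tri I I0 I1).
  pose proof (R_dist_tri M M0 M1). pose proof (R_dist_tri N N0 N1).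
  unfold R_dist in *. lra.
Qed.

Theorem mainTheorem7
  (b lam gam m mu r n p h beta delta e : R)
  (hb : 0 < b) (hlam : 0 < lam) (hgam : 0 < gam) (hm : 0 < m) (hmu : 0 < mu)
  (hr : 0 < r) (hn : 0 < n) (hp : 0 < p) (hh : 0 < h) (hbeta : 0 < beta)
  (hdelta : 0 < delta) (he : 0 < e)
  (I5 M5 N5 : R) (hI5 : 0 < I5) (hM5 : 0 <= M5) (hN5 : 0 <= N5)
  (heq : is_equilibrium b lam gam m mu r n p h beta delta e 0 I5 M5 N5)
  (c1 : b / I5 < gam * I5 + m + lam * N5)
  (c2 : 2 * n + 3 * p * (M5 + N5) / (h * I5) + beta * I5 + delta * N5
          > r + delta * M5)
  (c3 : (r - n - p * (2 * M5 + N5) / (h * I5) - beta * I5 - delta * N5)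
          * (delta * M5 - n - p * (M5 + 2 * N5) / (h * I5))
        + (beta * I5 - p * N5 / (h * I5) + delta * N5)
          * (p * M5 / (h * I5) + delta * M5 - r) > 0) :
  loc_asympt_stable b lam gam m mu r n p h beta delta e 0 I5 M5 N5.
Proof.
  destruct (core b lam gam m mu r n p h beta delta e hb hlam hgam hm hmu hr hn hp hh hbeta
     hdelta he I5 M5 N5 hI5 hM5 hN5 heq c1 c2 c3)
    as [K2 [alpha [rho0 [HK2 [Hal [Hrho0 [HDl Hreg]]]]]]].
  set (aa := Ea r n p h beta delta I5 M5 N5) in *.
  set (bb := Eb r p h delta I5 M5) in *.
  set (cc := Ec p h beta delta I5 N5) in *.
  set (dd := Ed n p h delta I5 M5 N5) in *.
  assert (Hsol : forall rho, 0 < rho -> rho <= rho0 -> exists dlt, 0 < dlt /\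
     forall Bf If Mf Nf, is_solution b lam gam m mu r n p h beta delta e Bf If Mf Nf ->
       dist4 (Bf 0) (If 0) (Mf 0) (Nf 0) 0 I5 M5 N5 < dlt ->
       forall t, 0 <= t -> Vf K2 aa bb cc dd I5 M5 N5 (Bf t) (If t) (Mf t) (Nf t) < rho).
  { intros rho Hr Hrr.
    destruct (V_small K2 aa bb cc dd I5 M5 N5 HK2 HDl rho Hr) as [d [Hd Hsm]].
    exists (d/2). split; [lra|].
    intros Bf If Mf Nf [Hdom [Hder Hcont]] H0.
    apply (invariance (fun t => Vf K2 aa bb cc dd I5 M5 N5 (Bf t) (If t) (Mf t) (Nf t))
      (fun t => dVf K2 aa bb cc dd I5 M5 N5 (Bf t) (If t) (Mf t) (Nf t)
         (fB b lam gam m mu r n p h beta delta e (Bf t) (If t) (Mf t) (Nf t))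
         (fI b lam gam m mu r n p h beta delta e (Bf t) (If t) (Mf t) (Nf t))
         (fM b lam gam m mu r n p h beta delta e (Bf t) (If t) (Mf t) (Nf t))
         (fN b lam gam m mu r n p h beta delta e (Bf t) (If t) (Mf t) (Nf t)))).
    - intros t Ht. destruct (Hder t Ht) as [d1 [d2 [d3 d4]]]. apply chainV; auto.
    - intros t Ht Hlt. simpl.
      destruct (Hdom t ltac:(lra)) as [hB _].
      pose proof (Hreg (Bf t) (If t) (Mf t) (Nf t) hB ltac:(lra)).
      pose proof (V_nonneg K2 aa bb cc dd I5 M5 N5 (Bf t) (If t) (Mf t) (Nf t) HK2 HDl hB).
      nra.
    - destruct (Hcont (d/2) ltac:(lra)) as [d0 [Hd0 Hc]].
      exists d0. split; [exact Hd0|]. intros t Ht.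
      destruct (Hdom t ltac:(lra)) as [hB _].
      apply Hsm; auto.
      pose proof (dist4_tri (Bf t) (If t) (Mf t) (Nf t) (Bf 0) (If 0) (Mf 0) (Nf 0) 0 I5 M5 N5).
      pose proof (Hc t Ht). lra. }
  split.
  - intros eps Heps.
    destruct (V_big K2 aa bb cc dd I5 M5 N5 HK2 HDl eps Heps) as [rhoE [HrE HE]].
    destruct (Hsol (Rmin rhoE rho0) (Rmin_pos _ _ HrE Hrho0) (Rmin_r _ _)) as [dlt [Hdlt Hs]].
    exists dlt. split; [exact Hdlt|].
    intros Bf If Mf Nf Hsl H0 t Ht.
    pose proof (Hs Bf If Mf Nf Hsl H0 t Ht).
    destruct Hsl as [Hdom _]. destruct (Hdom t Ht) as [hB _].
    apply HE; auto. pose proof (Rmin_l rhoE rho0). lra.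
  - destruct (Hsol rho0 Hrho0 (Rle_refl _)) as [dlt [Hdlt Hs]].
    exists dlt. split; [exact Hdlt|].
    intros Bf If Mf Nf Hsl H0 eps Heps.
    destruct (V_big K2 aa bb cc dd I5 M5 N5 HK2 HDl eps Heps) as [rhoE [HrE HE]].
    pose proof (Hs Bf If Mf Nf Hsl H0) as Hinv.
    destruct Hsl as [Hdom [Hder Hcont]].
    assert (Hdec := decay (fun t => Vf K2 aa bb cc dd I5 M5 N5 (Bf t) (If t) (Mf t) (Nf t))
      (fun t => dVf K2 aa bb cc dd I5 M5 N5 (Bf t) (If t) (Mf t) (Nf t)
         (fB b lam gam m mu r n p h beta delta e (Bf t) (If t) (Mf t) (Nf t))
         (fI b lam gam m mu r n p h beta delta e (Bf t) (If t) (Mf t) (Nf t))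
         (fM b lam gam m mu r n p h beta delta e (Bf t) (If t) (Mf t) (Nf t))
         (fN b lam gam m mu r n p h beta delta e (Bf t) (If t) (Mf t) (Nf t)))
      rho0 alpha Hal).
    simpl in Hdec.
    assert (Hd2 : forall t, 1 <= t ->
       Vf K2 aa bb cc dd I5 M5 N5 (Bf t) (If t) (Mf t) (Nf t) * exp (alpha * t) <= rho0 * exp alpha).
    { apply Hdec.
      - intros t Ht. destruct (Hder t Ht) as [d1 [d2 [d3 d4]]]. apply chainV; auto.
      - exact Hinv.
      - intros t Ht Hlt. destruct (Hdom t ltac:(lra)) as [hB _].
        apply Hreg; auto. }
    set (C := rho0 * exp alpha).
    assert (HC : 0 < C) by (unfold C; pose proof (exp_pos alpha); nra).
    set (L := ln (C / rhoE)).
    exists (1 + Rabs L / alpha). split.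
    { pose proof (Rabs_pos L). assert (0 <= Rabs L / alpha) by (unfold Rdiv; apply Rmult_le_pos; [lra| left; apply Rinv_0_lt_compat; lra]). lra. }
    intros t Ht.
    pose proof (Rabs_pos L). assert (0 <= Rabs L / alpha) by (unfold Rdiv; apply Rmult_le_pos; [lra| left; apply Rinv_0_lt_compat; lra]).
    destruct (Hdom t ltac:(lra)) as [hB _].
    apply HE; auto.
    assert (Hat : L < alpha * t).
    { assert (HH : alpha * (1 + Rabs L / alpha) <= alpha * t) by (apply Rmult_le_compat_l; lra).
      replace (alpha * (1 + Rabs L / alpha)) with (alpha + Rabs L) in HH by (field; lra).
      pose proof (Rle_abs L). lra. }
    apply exp_increasing in Hat. unfold L in Hat. rewrite exp_ln in Hat
      by (apply Rdiv_lt_0_compat; lra).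
    pose proof (Hd2 t ltac:(lra)) as HH. fold C in HH.
    set (Vt := Vf K2 aa bb cc dd I5 M5 N5 (Bf t) (If t) (Mf t) (Nf t)) in *.
    assert (C < rhoE * exp (alpha * t)).
    { apply Rmult_lt_compat_l with (r := rhoE) in Hat; [|lra].
      replace (rhoE * (C / rhoE)) with C in Hat by (field; lra). exact Hat. }
    pose proof (exp_pos (alpha * t)).
    apply Rmult_lt_reg_r with (exp (alpha * t)); [lra| lra].
Qed.
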